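(* For integers $n\ge0$ and $0\le i\le n/2$ let $g(i,n)=\binom{2(n-i)}{n-i}^2\binom{n-i}{i}$. Let $p$ be an odd prime, $m,r$ positive integers, and $j$ an integer with $0\le j\le mp^{r-1}/2$. Then $$(-4)^{jp}g(jp,mp^r)\equiv(-4)^jg(j,mp^{r-1})\pmod{p^r}.$$ *)

(* Defs.v *)
From mathcomp Require Import all_boot all_algebra.
Set Implicit Arguments. Unset Strict Implicit. Unset Printing Implicit Defensive.
Import GRing.Theory Num.Theory.

Definition g (i n : nat) : nat := 'C((n - i).*2, n - i) ^ 2 * 'C(n - i, i).

(* Main.v *)
Require Import Defs.
From mathcomp Require Import all_boot all_algebra.
From mathcomp Require Import ring zify.
Import GRing.Theory Num.Theory.
Local Open Scope ring_scope.

Definition cg {R : comPzRingType} (c x y : R) := exists z, x = y + c * z.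

Lemma cg_exp (R : comPzRingType) (c x y : R) n : cg c x y -> cg c (x ^+ n) (y ^+ n).
Proof.
move=> [z ->]; elim: n => [|n [w IH]]; first by exists 0; rewrite !expr0; ring.
exists (w * y + y ^+ n * z + c * w * z); rewrite !exprSr IH; ring.
Qed.

Lemma lift1 (R : comPzRingType) (p : nat) e (x y : R) : (0 < p)%N ->
  cg (p%:R ^+ e.+1) x y -> cg (p%:R ^+ e.+2) (x ^+ p) (y ^+ p).
Proof.
move=> p0 [d ->]; set Q := p%:R ^+ e.+1.
have H n : exists w, (y + Q * d) ^+ n.+1 = y ^+ n.+1 + n.+1%:R * y ^+ n * (Q * d) + Q ^+ 2 * w.
  elim: n => [|n [w IH]]; first by exists 0; rewrite !expr1 expr0; ring.
  exists (n.+1%:R * y ^+ n * d ^+ 2 + w * y + w * Q * d).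
  rewrite exprSr IH [n.+2%:R]mulrSr !exprS; ring.
have [w Hw] := H p.-1; rewrite prednK // in Hw.
exists (y ^+ p.-1 * d + p%:R ^+ e * w); rewrite Hw.
have E1 : Q ^+ 2 = p%:R ^+ e.+2 * p%:R ^+ e by rewrite /Q -exprM -exprD (_ : (e.+1 * 2 = e.+2 + e)%N) //; lia.
have E2 : p%:R * Q = p%:R ^+ e.+2 by rewrite /Q -exprS.
rewrite E1 -E2; ring.
Qed.

Lemma liftT (R : comPzRingType) (p : nat) (x y : R) t u : (0 < p)%N ->
  cg p%:R x y -> cg (p%:R ^+ t.+1) (x ^+ (p ^ t * u)) (y ^+ (p ^ t * u)).
Proof.
move=> p0 H; elim: t => [|t IH]; first by rewrite expn0 mul1n expr1; exact: cg_exp.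
rewrite expnSr mulnAC (exprM x) (exprM y); exact: lift1.
Qed.

Lemma combine (R : comPzRingType) (Q S E F A1 B1 A2 B2 A3 B3 : R) :
  cg Q E F -> cg Q A1 B1 -> cg Q A2 B2 -> cg (Q * S) A3 B3 -> (exists a, A3 = S * a) ->
  cg (Q * S) (E * A1 * A2 * A3) (F * B1 * B2 * B3).
Proof.
move=> [e ->] [x1 ->] [x2 ->] [x3 ->] [a Ha].
exists ((e * (B1 + Q * x1) * (B2 + Q * x2) + F * x1 * (B2 + Q * x2) + F * B1 * x2) * a + F * B1 * B2 * x3).
have h : (F + Q * e) * (B1 + Q * x1) * (B2 + Q * x2) * (B3 + Q * S * x3) =
  F * B1 * B2 * (B3 + Q * S * x3) + Q * (e * (B1 + Q * x1) * (B2 + Q * x2) + F * x1 * (B2 + Q * x2) + F * B1 * x2) * (S * a) by rewrite -Ha; ring.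
rewrite h; ring.
Qed.
Lemma coef_1X n i : ((1 + 'X : {poly int}) ^+ n)`_i = ('C(n, i))%:R.
Proof.
elim: n i => [|n IH] i.
  by rewrite expr0 coef1; case: i.
rewrite exprSr mulrDr mulr1 coefD coefMX IH.
case: i => [|i] /=; first by rewrite !bin0 addr0.
by rewrite IH binS natrD addrC.
Qed.

Lemma coef_1Xp (p a b : nat) : (0 < p)%N ->
  ((1 + 'X^p : {poly int}) ^+ a)`_(p * b) = ('C(a, b))%:R.
Proof.
move=> p0; elim: a b => [|a IH] b.
  rewrite expr0 coef1; case: b => [|b]; first by rewrite muln0.
  by rewrite muln_eq0 orbF bin0n gtn_eqF.
rewrite exprSr mulrDr mulr1 coefD coefMXn IH.
case: b => [|b]; first by rewrite muln0 p0 !bin0 addr0.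
have -> : (p * b.+1 < p)%N = false by apply/negbTE; rewrite -leqNgt leq_pmulr.
rewrite (_ : (p * b.+1 - p = p * b)%N); last by rewrite mulnS addKn.
by rewrite IH binS natrD addrC.
Qed.

Lemma frob_poly (p : nat) : prime p ->
  exists Q, (1 + 'X : {poly int}) ^+ p = 1 + 'X^p + p%:R * Q.
Proof.
move=> pp; have p1 := prime_gt1 pp.
exists (\poly_(i < p) (('C(p, i) %/ p)%N)%:R).
apply/polyP => i; rewrite coef_1X !coefD coef1 coefXn mulr_natl coefMn coef_poly.
have p0 := prime_gt0 pp.
have [i0|i0] := posnP i.
  by subst i; rewrite bin0 (ltn_eqF p0) p0 divn_small //= mul0rn !addr0.
have [ilt|ige] := ltnP i p.
  rewrite (ltn_eqF ilt) mulr0n !add0r -[_ *+ p]mulr_natr -natrM divnK //.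
  by rewrite prime_dvd_bin // i0 ilt.
rewrite mul0rn addr0 mulr0n add0r.
have [->|ine] := eqVneq i p; first by rewrite binn /=.
rewrite bin_small; last by rewrite ltn_neqAle eq_sym ine.
by [].
Qed.

Lemma BL (p t a b : nat) : prime p -> (p ^ t %| a)%N ->
  cg ((p%:R : int) ^+ t.+1) ('C(p * a, p * b))%:R ('C(a, b))%:R.
Proof.
move=> pp /dvdnP [u ->]; have p0 := prime_gt0 pp.
have [Q HQ] := frob_poly p pp.
have H1 : cg (p%:R : {poly int}) ((1 + 'X) ^+ p) (1 + 'X^p) by exists Q.
have [w Hw] := @liftT _ p _ _ t u p0 H1.
exists (w`_(p * b)).
have := congr1 (fun q : {poly int} => q`_(p * b)) Hw.
rewrite /= -exprM coef_1X coefD coef_1Xp // -natrX mulr_natl coefMn ?mulr1 (mulnC u) => ->.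
by rewrite -natrX mulr_natl.
Qed.

Lemma fermat_nat (p n : nat) : prime p -> cg (p%:R : int) (n%:R ^+ p) n%:R.
Proof.
move=> pp; have [Q HQ] := frob_poly p pp.
have E x : (1 + x) ^+ p = 1 + x ^+ p + p%:R * Q.[x].
  have := congr1 (fun q : {poly int} => q.[x]) HQ; rewrite /= mulr_natl !hornerE hornerMn => ->; by rewrite mulr_natl.
elim: n => [|n [z IH]]; first by exists 0; rewrite expr0n gtn_eqF ?prime_gt0 // mulr0 addr0.
exists (z + Q.[n%:R]); rewrite mulrS E IH; ring.
Qed.

Lemma fermat_m4 (p : nat) : prime p -> odd p -> cg (p%:R : int) ((-4) ^+ p) (-4).
Proof.
move=> pp op; have [z Hz] := fermat_nat p 4 pp.
exists (- z); rewrite exprNn -signr_odd op expr1 Hz; ring.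
Qed.

Lemma Vlem (p e i M : nat) : prime p -> (0 < i)%N -> (p ^ e %| M)%N ->
  (p ^ (e - logn p i) %| 'C(M, i))%N.
Proof.
move=> pp i0 hM.
have H : (p ^ e %| i * 'C(M, i))%N.
  by rewrite -(prednK i0) -mul_bin_diag dvdn_mulr.
have [u cop Hi] := pfactor_coprime pp i0.
have [hv|hv] := leqP (logn p i) e; last first.
  by rewrite (_ : (e - logn p i = 0)%N) ?expn0 ?dvd1n //; lia.
move: H; rewrite {1}Hi.
have -> : (p ^ e = p ^ (e - logn p i) * p ^ logn p i)%N by rewrite -expnD subnK.
rewrite mulnAC dvdn_pmul2r ?expn_gt0 ?prime_gt0 //.
rewrite Gauss_dvdr //; exact: coprimeXl.
Qed.

Lemma Id (K J : nat) : (J <= K)%N ->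
  ('C(K.*2, K) * 'C(K, J) = 'C(K.*2, K - J) * 'C(K + J, J))%N.
Proof.
move=> JK; rewrite -addnn.
have F1 := bin_fact (leq_addl K K).
have F2 := bin_fact JK.
have F3 := bin_fact (leq_trans (leq_subr J K) (leq_addl K K)).
have F4 := bin_fact (leq_addl K J).
rewrite addnK in F1; rewrite addnK in F4.
rewrite (_ : (K + K - (K - J) = K + J)%N) in F3; last by lia.
have Zp : (0 < J`! * (K - J)`! * K`!)%N by rewrite !muln_gt0 !fact_gt0.
apply/eqP; rewrite -(eqn_pmul2r Zp).
have -> : ('C(K + K, K) * 'C(K, J) * (J`! * (K - J)`! * K`!) =
   'C(K + K, K) * (K`! * ('C(K, J) * (J`! * (K - J)`!))))%N by ring.
have -> : ('C(K + K, K - J) * 'C(K + J, J) * (J`! * (K - J)`! * K`!) =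
   'C(K + K, K - J) * ((K - J)`! * ('C(K + J, J) * (J`! * K`!))))%N by ring.
by rewrite F2 F4 F1 F3.
Qed.

Theorem mainTheorem16 (p m r j : nat) :
  prime p -> odd p -> (0 < m)%N -> (0 < r)%N ->
  (j.*2 <= m * p ^ r.-1)%N ->
  (((-4 : int) ^+ (j * p) * (g (j * p) (m * p ^ r))%:Z)
     = ((-4 : int) ^+ j * (g j (m * p ^ r.-1))%:Z) %[mod (p ^ r)%:Z])%Z.
Proof.
move=> pp op m0; case: r => [//|r'] _ /= hj.
have p0 := prime_gt0 pp.
set N := (m * p ^ r')%N in hj *.
have jN : (j <= N)%N by move: hj; rewrite -addnn; lia.
set k := (N - j)%N.
have jk : (j <= k)%N by move: hj; rewrite /k -addnn; lia.
have kjN : (k + j = N)%N by rewrite /k subnK.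
have G1 : g (j * p) (m * p ^ r'.+1) =
   ('C(p * k.*2, p * k) * 'C(p * k.*2, p * (k - j)) * 'C(p * N, p * j))%N.
  rewrite /g (_ : (m * p ^ r'.+1 - j * p = p * k)%N); last first.
    by rewrite /k mulnBr expnS mulnCA (mulnC j).
  rewrite -mulnn -mulnA Id; last by rewrite (mulnC j) leq_mul2l jk orbT.
  by rewrite mulnA doubleMr (mulnC j) -mulnBr -mulnDr kjN.
have G2 : g j N = ('C(k.*2, k) * 'C(k.*2, k - j) * 'C(N, j))%N.
  by rewrite /g -/k -mulnn -mulnA Id // mulnA kjN.
pose t := if j == 0%N then r' else minn (logn p j) r'.
have ht : (t <= r')%N by rewrite /t; case: ifP => _ //; exact: geq_minr.
have hjt : (p ^ t %| j)%N.
  rewrite /t; case: ifP => [/eqP -> //|/negbT j0].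
  apply: dvdn_trans (pfactor_dvdnn p j); apply: dvdn_exp2l; exact: geq_minl.
have hNt : (p ^ t %| N)%N by apply: dvdn_mull; exact: dvdn_exp2l.
have hkt : (p ^ t %| k)%N by apply: dvdn_sub.
have hk2 : (p ^ t %| k.*2)%N by rewrite -muln2 dvdn_mulr.
have hN : (p ^ r' %| N)%N by apply: dvdn_mull.
have hC3 : (p ^ (r' - t) %| 'C(p * N, p * j))%N.
  rewrite /t; case: ifP => [_|/negbT j0]; first by rewrite subnn expn0 dvd1n.
  have j0' : (0 < j)%N by rewrite lt0n.
  have L : logn p (p * j) = (logn p j).+1.
    by rewrite lognM // (_ : logn p p = 1%N) //; have := pfactorK 1 pp; rewrite expn1.
  have pj0 : (0 < p * j)%N by rewrite muln_gt0 p0 j0'.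
  have := @Vlem p r'.+1 (p * j) (p * N) pp pj0.
  rewrite L (_ : (r'.+1 - (logn p j).+1 = r' - minn (logn p j) r')%N); last by lia.
  apply; rewrite expnS dvdn_pmul2l //.
have QS : ((p%:R : int) ^+ t.+1 * (p%:R) ^+ (r' - t) = (p%:R) ^+ r'.+1).
  by rewrite -exprD; congr (_ ^+ _); lia.
have hE : cg ((p%:R : int) ^+ t.+1) ((-4) ^+ (p * j)) ((-4) ^+ j).
  have [u Hu] := dvdnP hjt.
  have := @liftT _ p _ _ t u p0 (fermat_m4 p pp op).
  by rewrite (mulnC (p ^ t)%N u) -Hu -exprM.
have h1 := @BL p t k.*2 k pp hk2.
have h2 := @BL p t k.*2 (k - j) pp hk2.
have h3 := @BL p r' N j pp hN.
rewrite -QS in h3.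
have h4 : exists a, ('C(p * N, p * j))%:R = (p%:R : int) ^+ (r' - t) * a.
  have [w ->] := dvdnP hC3; exists w%:R; by rewrite natrM natrX mulrC.
have [z Hz] := @combine _ _ _ _ _ _ _ _ _ _ _ hE h1 h2 h3 h4.
rewrite G1 G2 (mulnC j p) -!natz !natrM !mulrA Hz QS natrX.
by rewrite addrC mulrC modzMDl.
Qed.
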